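(* Let $n\ge1$, $H,K\le S_n$, $\phi:H\to\mathbb C$, $\psi:K\to\mathbb C$ arbitrary functions, and let $Y\subseteq\mathbb S_n(\mathbb C)$ be a set of symmetric matrices with $S_\sigma\in Y$ for every $\sigma\in S_n$. Then $d_\phi^H(A)=d_\psi^K(A)$ for all $A\in Y$ if and only if $d_\phi^H(S_\sigma)=d_\psi^K(S_\sigma)$ for all $\sigma\in S_n$.
   Context: $\mathbb S_n(\mathbb C)$ is the set of complex symmetric $n\times n$ matrices. For $G\le S_n$ and $\chi:G\to\mathbb C$, $\hat\chi$ is the extension of $\chi$ by $0$ outside $G$ and $d_\chi^G(A)=\sum_{\sigma\in S_n}\hat\chi(\sigma)\prod_{i=1}^n A_{i\,\sigma(i)}$. For $\sigma\in S_n$, $S_\sigma$ is the $n\times n$ $0/1$ matrix with $(S_\sigma)_{ij}=1$ iff $\sigma(i)=j$ or $\sigma^{-1}(i)=j$. *)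

(* Defs.v *)
From HB Require Import structures.
From mathcomp Require Import all_boot all_order all_algebra all_fingroup.
Set Implicit Arguments. Unset Strict Implicit. Unset Printing Implicit Defensive.
Import Order.TTheory GRing.Theory Num.Theory.
Local Open Scope ring_scope.

Definition ext_chi (C : nzRingType) (n : nat) (G : {set 'S_n})
  (chi : 'S_n -> C) (s : 'S_n) : C :=
  if s \in G then chi s else 0.

Definition gmf (C : comNzRingType) (n : nat) (G : {set 'S_n})
  (chi : 'S_n -> C) (A : 'M[C]_n) : C :=
  \sum_(s : 'S_n) ext_chi G chi s * \prod_(i < n) A i (s i).

Definition Smat (C : nzRingType) (n : nat) (s : 'S_n) : 'M[C]_n :=
  \matrix_(i, j) (if (s i == j) || ((s^-1)%g i == j) then 1 else 0).

(* Main.v *)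
Require Import Defs.
From HB Require Import structures.
From mathcomp Require Import all_boot all_order all_algebra all_fingroup.
Import GRing.Theory Num.Theory.
Local Open Scope ring_scope.
Set Implicit Arguments. Unset Strict Implicit.

Definition sle n (r t : 'S_n) :=
  [forall i, (t i == r i) || ((t^-1)%g i == r i)].
Definition seqv n (a b : 'S_n) := sle a b && sle b a.
Definition mu n (s : 'S_n) := #|[set i | s (s i) != i]|.

Lemma sle_refl n (r : 'S_n) : sle r r.
Proof. by apply/forallP => i; rewrite eqxx. Qed.

Lemma le_inv n (r t : 'S_n) : sle r t ->
  forall i, (t i == (r^-1)%g i) || ((t^-1)%g i == (r^-1)%g i).
Proof.
move/forallP=> h i; have := h ((r^-1)%g i); rewrite permKV.
case/orP=> /eqP e.
- by apply/orP; right; apply/eqP; rewrite -[in LHS]e permK.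
- by apply/orP; left; apply/eqP; rewrite -[in LHS]e permKV.
Qed.

Lemma sle_trans n (a b c : 'S_n) : sle a b -> sle b c -> sle a c.
Proof.
move=> hab hbc; apply/forallP => i.
move/forallP: hab => /(_ i) /orP [/eqP <-|/eqP <-].
- exact: (forallP hbc i).
- exact: le_inv hbc i.
Qed.

Lemma mu_sub n (r t : 'S_n) : sle r t -> forall i, t (t i) = i -> r (r i) = i.
Proof.
move=> h i e.
have e1 : (t^-1)%g i = t i by rewrite -[in LHS]e permK.
have ri : r i = t i.
  by move/forallP: h => /(_ i); rewrite e1 orbb => /eqP <-.
move/forallP: h => /(_ (t i)); rewrite e permK orbb => /eqP e2.
by rewrite ri -e2.
Qed.

Lemma mu_proper n (r t : 'S_n) : sle r t ->
  (forall i, t (t i) != i -> r (r i) != i) -> sle t r.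
Proof.
move=> h h2; apply/forallP => i.
have hi := forallP h i; have hv := le_inv h i.
case: (eqVneq (t (t i)) i) => e.
- have e1 : (t^-1)%g i = t i by rewrite -[in LHS]e permK.
  by rewrite e1 orbb in hi; rewrite eq_sym hi.
- have ne : r i != (r^-1)%g i.
    by apply/negP => /eqP ee; move: (h2 i e); rewrite ee permKV eqxx.
  case/orP: hi => /eqP hi; first by rewrite hi eqxx.
  case/orP: hv => /eqP hv; first by rewrite hv eqxx orbT.
  by move: ne; rewrite -hi -hv eqxx.
Qed.

Lemma mu_lt n (r t : 'S_n) : sle r t -> ~~ sle t r -> (mu r < mu t)%N.
Proof.
move=> h1 h2; apply: proper_card; apply/properP; split.
- apply/subsetP => i; rewrite !inE; apply: contraNN => /eqP e.
  by apply/eqP; apply: mu_sub h1 i e.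
- apply/exists_inP; move: h2; apply: contraNT => /exists_inPn hn.
  apply: (mu_proper h1) => i ti.
  by have := hn i; rewrite !inE ti negbK; apply.
Qed.

Lemma sum_classes (R : nmodType) (T : finType) (e : rel T) (F : T -> R) :
  (forall x, e x x) -> (forall x y, e x y -> e y x) ->
  (forall x y z, e x y -> e y z -> e x z) ->
  forall S : {set T}, (forall x y, x \in S -> e x y -> y \in S) ->
  (forall x, x \in S -> \sum_(y | e x y) F y = 0) -> \sum_(y in S) F y = 0.
Proof.
move=> er es et S.
move: {2}#|S| (leqnn #|S|) => m; elim: m S => [|m IH] S hS cl hz.
  by move: hS; rewrite leqn0 cards_eq0 => /eqP ->; rewrite big_set0.
case: (set_0Vmem S) => [->|[x xS]]; first by rewrite big_set0.
rewrite (bigID (e x)) /=.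
have -> : \sum_(i in S | e x i) F i = \sum_(i | e x i) F i.
  apply: eq_bigl => y; apply/andP/idP => [[]//|exy]; split=> //; exact: cl xS exy.
rewrite hz // add0r.
have -> : \sum_(i in S | ~~ e x i) F i = \sum_(i in [set y in S | ~~ e x y]) F i.
  by apply: eq_bigl => y; rewrite inE.
apply: IH.
- rewrite -ltnS; apply: leq_trans hS; apply: proper_card; apply/properP; split.
    by apply/subsetP => y; rewrite inE => /andP[].
  by exists x => //; rewrite inE er andbF.
- move=> y z; rewrite !inE => /andP[yS nexy] eyz; rewrite (cl y z yS eyz) /=.
  apply/negP => exz; move/negP: nexy; apply; exact: et exz (es _ _ eyz).
- by move=> y; rewrite inE => /andP[yS _]; exact: hz.
Qed.

Lemma seqv_refl n (x : 'S_n) : seqv x x.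
Proof. by rewrite /seqv sle_refl. Qed.
Lemma seqv_sym n (x y : 'S_n) : seqv x y -> seqv y x.
Proof. by rewrite /seqv andbC. Qed.
Lemma seqv_trans n (x y z : 'S_n) : seqv x y -> seqv y z -> seqv x z.
Proof.
move=> /andP[h1 h2] /andP[h3 h4]; apply/andP; split.
- exact: sle_trans h1 h3.
- exact: sle_trans h4 h2.
Qed.

Lemma class_zero (R : nmodType) n (f : 'S_n -> R) :
  (forall t, \sum_(r | sle r t) f r = 0) ->
  forall t, \sum_(r | seqv t r) f r = 0.
Proof.
move=> hf.
suff H : forall m t, (mu t < m)%N -> \sum_(r | seqv t r) f r = 0.
  by move=> t; apply: (H (mu t).+1).
elim=> // m IH t ht.
have := hf t; rewrite (bigID (sle t)) /=.
have -> : \sum_(i | sle i t && ~~ sle t i) f i =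
          \sum_(i in [set r | sle r t && ~~ sle t r]) f i.
  by apply: eq_bigl => r; rewrite inE.
rewrite (@sum_classes _ _ (@seqv n) f (@seqv_refl n) (@seqv_sym n) (@seqv_trans n)).
- rewrite addr0 => e; rewrite -[RHS]e; apply: eq_bigl => r; by rewrite /seqv andbC.
- move=> x y; rewrite !inE => /andP[h1 h2] /andP[h3 h4].
  rewrite (sle_trans h4 h1) /=; apply: contra h2 => h5; exact: sle_trans h5 h4.
- move=> x; rewrite inE => /andP[h1 h2]; apply: IH.
  by apply: leq_trans (mu_lt h1 h2) _.
Qed.

Lemma pair_count (T : eqType) (a b c d j : T) :
  (c == a) || (d == a) -> (c == b) || (d == b) ->
  (a == c) || (b == c) -> (a == d) || (b == d) ->
  ((a == j) + (b == j) = (c == j) + (d == j))%N.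
Proof.
move=> /orP[/eqP<-|/eqP<-] /orP[/eqP<-|/eqP<-] h3 h4; rewrite ?orbb in h3 h4.
- by move/eqP: h4 ->.
- by [].
- by rewrite addnC.
- by move/eqP: h3 ->.
Qed.

Lemma N_eq n (r s : 'S_n) : seqv r s -> forall i j,
  ((r i == j) + (r j == i) = (s i == j) + (s j == i))%N.
Proof.
move=> /andP[h1 h2] i j.
rewrite (canF_eq (permK r) j i) (canF_eq (permK s) j i) [j == _]eq_sym [j == (s^-1)%g i]eq_sym.
apply: pair_count.
- exact: (forallP h1 i).
- exact: le_inv h1 i.
- exact: (forallP h2 i).
- exact: le_inv h2 i.
Qed.

Lemma diag_eq n (r s : 'S_n) : seqv r s -> forall i, (r i == i) = (s i == i).
Proof.
move=> h i; have := N_eq h i i.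
by case: (r i == i); case: (s i == i).
Qed.

Definition Pm (C : comNzRingType) n (A : 'M[C]_n) (s : 'S_n) :=
  \prod_(i < n) A i (s i).

Lemma Pm_sym (C : comNzRingType) n (A : 'M[C]_n) (s : 'S_n) : A^T = A ->
  Pm A s = \prod_(i < n) \prod_(j < n)
    ((if (i < j)%N then A i j ^+ ((s i == j) + (s j == i)) else 1) *
     (if i == j then A i j ^+ (s i == j) else 1)).
Proof.
move=> hA.
have sA : forall i j, A j i = A i j.
  by move=> i j; have := congr1 (fun M : 'M[C]_n => M i j) hA; rewrite mxE.
have -> : Pm A s = \prod_(i < n) \prod_(j < n) A i j ^+ (s i == j).
  apply: eq_bigr => i _; rewrite (bigD1 (s i)) //= eqxx expr1 big1 ?mulr1 //.
  by move=> j; rewrite eq_sym => /negbTE ->.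
have -> : \prod_(i < n) \prod_(j < n) A i j ^+ (s i == j) =
  \prod_(i < n) \prod_(j < n)
    ((if (i < j)%N then A i j ^+ (s i == j) else 1) *
     ((if (j < i)%N then A i j ^+ (s i == j) else 1) *
     (if i == j then A i j ^+ (s i == j) else 1))).
  apply: eq_bigr => i _; apply: eq_bigr => j _.
  case: ltngtP => h.
  - by rewrite ifF ?mulr1 //; apply/negbTE; rewrite neq_ltn h.
  - by rewrite ifF ?mulr1 ?mul1r //; apply/negbTE; rewrite neq_ltn h orbT.
  - by rewrite ifT ?mul1r //; apply/eqP; apply: val_inj.
under eq_bigr do rewrite big_split /=.
rewrite big_split /=.
under [X in _ * X = _]eq_bigr do rewrite big_split /=.
rewrite big_split /= [X in _ * (X * _)]exchange_big /= mulrA -big_split /=.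
rewrite -big_split /=; apply: eq_bigr => i _; rewrite -!big_split /=.
apply: eq_bigr => j _.
case: ltngtP => h.
- by rewrite (sA i j) exprD.
- by rewrite !mul1r.
- by rewrite !mul1r.
Qed.

Lemma Pm_eqv (C : comNzRingType) n (A : 'M[C]_n) (r s : 'S_n) : A^T = A ->
  seqv r s -> Pm A r = Pm A s.
Proof.
move=> hA h; rewrite !Pm_sym //; apply: eq_bigr => i _; apply: eq_bigr => j _.
rewrite (N_eq h i j); case: (i =P j) => // ij; subst j.
by rewrite (diag_eq h i).
Qed.

Lemma prodS (C : comNzRingType) n (r t : 'S_n) :
  \prod_(i < n) (Smat C t) i (r i) = if sle r t then 1 else 0.
Proof.
case: (boolP (sle r t)) => h.
- by apply: big1 => i _; rewrite mxE; move/forallP: h => /(_ i) ->.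
- move/forallPn: h => [i hi].
  by rewrite (bigD1 i) //= mxE (negbTE hi) mul0r.
Qed.

Theorem mainTheorem7 (C : numClosedFieldType) (n : nat) (hn : (0 < n)%N)
  (H K : {group 'S_n}) (phi psi : 'S_n -> C) (Y : 'M[C]_n -> Prop)
  (hYsym : forall A, Y A -> A^T = A)
  (hYS : forall s : 'S_n, Y (Smat C s)) :
  (forall A, Y A -> gmf H phi A = gmf K psi A) <->
  (forall s : 'S_n, gmf H phi (Smat C s) = gmf K psi (Smat C s)).
Proof.
split; first by move=> h s; exact: h _ (hYS s).
move=> h A YA; have hA := hYsym A YA.
apply/eqP; rewrite -subr_eq0; apply/eqP.
pose f := fun s : 'S_n => ext_chi H phi s - ext_chi K psi s.
have hf : forall t, \sum_(r | sle r t) f r = 0.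
  move=> t; have := h t; move/eqP; rewrite -subr_eq0 /gmf -sumrB => /eqP e.
  rewrite -[RHS]e big_mkcond /=; apply: eq_bigr => r _.
  rewrite -mulrBl prodS; by case: ifP; rewrite ?mulr1 ?mulr0.
have hc := class_zero hf.
rewrite /gmf -sumrB.
have -> : \sum_(i : 'S_n) (ext_chi H phi i * \prod_(i0 < n) A i0 (i i0) -
    ext_chi K psi i * \prod_(i0 < n) A i0 (i i0)) =
    \sum_(i in [set: 'S_n]) f i * Pm A i.
  by apply: eq_big => [i|i _]; rewrite ?inE // -mulrBl.
apply: (@sum_classes _ _ (@seqv n) _ (@seqv_refl n) (@seqv_sym n) (@seqv_trans n)).
  by move=> *; rewrite inE.
move=> x _.
rewrite (eq_bigr (fun y => f y * Pm A x)); last first.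
  by move=> y hy; rewrite (Pm_eqv hA (seqv_sym hy)).
by rewrite -mulr_suml hc mul0r.
Qed.
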